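(* Let $n\ge1$ have binary expansion $n=\sum_{j=1}^{\ell}2^{m_j}$ with $\ell\ge1$ and integers $m_1>m_2>\cdots>m_\ell\ge0$. Then $$c_n=\sum_{j=2}^{\ell}2^{m_j}\bigl(m_1-m_j-2(j-2)\bigr).$$
   Context: Bifurcating trees: rooted trees in which every internal node has exactly two children; $\mathcal{T}_n$ is the set of isomorphism classes of bifurcating trees with $n$ leaves. For a node $w$, $\kappa_T(w)$ is its number of descendant leaves. The Colless index is $\mathcal{C}(T)=\sum_{v}|\kappa_T(v_1)-\kappa_T(v_2)|$, summed over internal nodes $v$ with children $v_1,v_2$; $c_n=\min\{\mathcal{C}(T):T\in\mathcal{T}_n\}$. *)

(* Defs.v *)
From mathcomp Require Import all_boot all_order all_algebra.
Import Order.TTheory GRing.Theory Num.Theory.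
Set Implicit Arguments. Unset Strict Implicit. Unset Printing Implicit Defensive.

(* Isomorphism classes are irrelevant for the minimum Colless index,
   since the Colless index is an isomorphism invariant (and the order of the
   two children is irrelevant in |k(v1) - k(v2)|). *)
Inductive btree : Type :=
| Leaf : btree
| Node : btree -> btree -> btree.

Fixpoint leaves (t : btree) : nat :=
  match t with
  | Leaf => 1
  | Node l r => leaves l + leaves r
  end.

Definition absdiff (a b : nat) : nat := (a - b) + (b - a).

Fixpoint colless (t : btree) : nat :=
  match t with
  | Leaf => 0
  | Node l r => absdiff (leaves l) (leaves r) + colless l + colless r
  end.

(* The value c is taken in int so that c_n can be compared directly with
   integer-valued formulas (no truncation). *)
Definition is_min_colless (n : nat) (c : int) : Prop :=
  (exists t, leaves t = n /\ Posz (colless t) = c) /\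
  (forall t, leaves t = n -> (c <= Posz (colless t))%R).

(* Main.v *)
Require Import Defs.
From mathcomp Require Import all_boot all_order all_algebra.
From mathcomp Require Import zify.
Import Order.TTheory GRing.Theory Num.Theory.

Fixpoint pcf (k n : nat) : nat := if k is k'.+1 then odd n + pcf k' n./2 else 0.
Definition pc n := pcf n n.

Lemma pcf0 k : pcf k 0 = 0.
Proof. by elim: k => //= k ->. Qed.

Lemma halfP n : n = odd n + 2 * n./2.
Proof. by rewrite mul2n odd_double_half. Qed.

Lemma pcf_eq k1 k2 n : n <= k1 -> n <= k2 -> pcf k1 n = pcf k2 n.
Proof.
elim: k1 k2 n => [|k1 IH] [|k2] n /= h1 h2.
- by [].
- have -> : n = 0 by lia. by rewrite pcf0.
- have -> : n = 0 by lia. by rewrite /= pcf0.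
- have hn := halfP n. rewrite (IH k2) //; case: (odd n) hn => /=; lia.
Qed.

Lemma pc_eq n : pc n = odd n + pc n./2.
Proof.
case: n => [|n] //. rewrite /pc /=. congr (_ + _). apply: pcf_eq => //.
have hn := halfP n.+1. case: (odd n.+1) hn => /=; lia.
Qed.

Lemma pc_bit (b : bool) n : pc (b + 2 * n) = b + pc n.
Proof. by rewrite pc_eq mul2n oddD odd_double addbF half_bit_double; case: b. Qed.

Lemma pc_pow x k : k < 2 ^ x -> pc (2 ^ x + k) = (pc k).+1.
Proof.
elim: x k => [|x IH] k.
- rewrite expn0 => hk. have -> : k = 0 by lia. by [].
- rewrite expnS => hk. have hk2 := halfP k.
  have -> : 2 * 2 ^ x + k = odd k + 2 * (2 ^ x + k./2) by lia.
  rewrite pc_bit IH; last by case: (odd k) hk2 => /=; lia.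
  rewrite (pc_eq k). lia.
Qed.

Definition S r := \sum_(0 <= k < r) pc k.

Lemma S0 : S 0 = 0. Proof. by rewrite /S big_geq. Qed.
Lemma SS r : S r.+1 = S r + pc r. Proof. by rewrite /S big_nat_recr. Qed.

Lemma S_double r : S (2 * r) = 2 * S r + r.
Proof.
elim: r => [|r IH]; first by rewrite muln0 S0.
have -> : 2 * r.+1 = (2 * r).+1.+1 by lia.
rewrite !SS IH.
have e1 : pc (2 * r) = pc r by rewrite -(add0n (2 * r)) (pc_bit false).
have e2 : pc (2 * r).+1 = (pc r).+1 by rewrite -add1n (pc_bit true).
rewrite e1 e2. lia.
Qed.

Lemma S_pow2 x : 2 * S (2 ^ x) = x * 2 ^ x.
Proof.
elim: x => [|x IH]; first by rewrite expn0 (SS 0) S0.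
rewrite expnS S_double. lia.
Qed.

Lemma S_pow_add x k : k <= 2 ^ x -> S (2 ^ x + k) = S (2 ^ x) + S k + k.
Proof.
elim: k => [|k IH] hk; first by rewrite !addn0 S0 addn0.
rewrite addnS !SS IH; last by lia.
rewrite pc_pow; last by lia. lia.
Qed.

Lemma pc_double y : pc (2 * y) = pc y.
Proof. by rewrite -(add0n (2 * y)) (pc_bit false). Qed.

Fixpoint balf (k n : nat) : btree :=
  if k is k'.+1 then (if n <= 1 then Leaf else Node (balf k' (uphalf n)) (balf k' n./2))
  else Leaf.
Definition bal n := balf n n.

Lemma balf_eq k1 k2 n : n <= k1 -> n <= k2 -> balf k1 n = balf k2 n.
Proof.
elim: k1 k2 n => [|k1 IH] [|k2] n /= h1 h2 //.
- by have -> : n = 0 by lia.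
- by have -> : n = 0 by lia.
- case: ifP => // hn. have e := halfP n. rewrite uphalf_half.
  rewrite (IH k2 (odd n + n./2)); last 2 first.
  + by case: (odd n) e => /=; lia.
  + by case: (odd n) e => /=; lia.
  rewrite (IH k2 n./2) //; by case: (odd n) e => /=; lia.
Qed.

Lemma balfS k n : balf k.+1 n = if n <= 1 then Leaf else Node (balf k (uphalf n)) (balf k n./2).
Proof. by []. Qed.

Lemma bal_eq n : 2 <= n -> bal n = Node (bal (uphalf n)) (bal n./2).
Proof.
move=> hn. rewrite /bal. case: n hn => [|n] // hn.
rewrite balfS ifF; last by lia.
have e := halfP n.+1.
congr Node; apply: balf_eq; rewrite ?uphalf_half; case: (odd n.+1) e => /=; lia.
Qed.

Lemma leaves_bal n : 1 <= n -> leaves (bal n) = n.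
Proof.
elim: n {-2}n (leqnn n) => [|N IH] n hN hn; first by lia.
case: (leqP n 1) => h.
- have -> : n = 1 by lia. by [].
- rewrite bal_eq //= uphalf_half. have e := halfP n.
  rewrite !IH; by case: (odd n) e => /=; lia.
Qed.

Definition f n := colless (bal n).

Lemma f1 : f 1 = 0. Proof. by []. Qed.

Lemma collessN l r : colless (Node l r) = absdiff (leaves l) (leaves r) + colless l + colless r.
Proof. by []. Qed.

Lemma f_rec n : 2 <= n -> f n = odd n + f (uphalf n) + f n./2.
Proof.
move=> hn. have e := halfP n.
rewrite /f bal_eq // collessN !leaves_bal; rewrite ?uphalf_half;
 try by (case: (odd n) e => /=; lia).
rewrite /absdiff. case: (odd n) e => /= e; lia.
Qed.

Lemma f_even x : 1 <= x -> f (2 * x) = 2 * f x.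
Proof.
move=> hx. rewrite f_rec; last by lia.
have o : odd (2 * x) = false by rewrite mul2n odd_double.
have h : (2 * x)./2 = x by rewrite mul2n doubleK.
rewrite uphalf_half o h.
have -> : false + x = x by []. lia.
Qed.

Lemma f_odd x : 1 <= x -> f (2 * x + 1) = f (x + 1) + f x + 1.
Proof.
move=> hx. rewrite f_rec; last by lia.
have o : odd (2 * x + 1) = true by rewrite addn1 oddS mul2n odd_double.
have h : (2 * x + 1)./2 = x by rewrite mul2n addnC; exact: (half_bit_double x true).
rewrite uphalf_half o h.
have -> : true + x = x + 1 by rewrite addnC. lia.
Qed.

Lemma f2 : f 2 = 0. Proof. by []. Qed.

Lemma parity n : exists x, n = 2 * x \/ n = 2 * x + 1.
Proof. exists n./2. have := halfP n. case: (odd n) => /=; lia. Qed.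

Lemma f_sub N a b : a + b <= N -> 1 <= a -> 1 <= b ->
  f (a + b) <= f a + f b + absdiff a b.
Proof.
rewrite /absdiff.
elim: N a b => [|N IH] a b hN ha hb; first by lia.
have [x [ea|ea]] := parity a; have [y [eb|eb]] := parity b; subst a b.
- have -> : 2 * x + 2 * y = 2 * (x + y) by lia.
  rewrite !f_even; try lia. have := IH x y. lia.
- have -> : 2 * x + (2 * y + 1) = 2 * (x + y) + 1 by lia.
  rewrite f_even; last by lia. rewrite f_odd; last by lia.
  case: (posnP y) => hy.
  + subst y. rewrite ?muln0 ?addn0 ?add0n. rewrite ?f1. have := IH x 1. rewrite f1. lia.
  + rewrite f_odd //. have := IH x y. have := IH x (y + 1).
    have -> : x + (y + 1) = x + y + 1 by lia. lia.
- have -> : 2 * x + 1 + 2 * y = 2 * (x + y) + 1 by lia.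
  rewrite f_even; last by lia. rewrite f_odd; last by lia.
  case: (posnP x) => hx.
  + subst x. rewrite ?muln0 ?addn0 ?add0n ?f1. have := IH y 1. rewrite f1 addnC. lia.
  + rewrite f_odd //. have := IH x y. have := IH (x + 1) y.
    have -> : x + 1 + y = x + y + 1 by lia. lia.
- have -> : 2 * x + 1 + (2 * y + 1) = 2 * (x + y + 1) by lia.
  rewrite f_even; last by lia.
  case: (posnP x) => hx; case: (posnP y) => hy.
  + subst x y. by [].
  + subst x. rewrite ?muln0 ?addn0 ?add0n ?f1 f_odd //. have := IH y 1. rewrite f1. lia.
  + subst y. rewrite ?muln0 ?addn0 ?add0n ?f1 f_odd //. have := IH x 1. rewrite f1. lia.
  + rewrite !f_odd //. have := IH x (y + 1). have := IH (x + 1) y.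
    have -> : x + (y + 1) = x + y + 1 by lia.
    have -> : x + 1 + y = x + y + 1 by lia. lia.
Qed.

Lemma leaves_pos t : 1 <= leaves t.
Proof. elim: t => //= l hl r hr. lia. Qed.

Lemma f_le t : f (leaves t) <= colless t.
Proof.
elim: t => //= l hl r hr.
have := @f_sub _ _ _ (leqnn (leaves l + leaves r)) (leaves_pos l) (leaves_pos r).
rewrite /absdiff. lia.
Qed.

Lemma f_pow m r : r <= 2 ^ m -> f (2 ^ m + r) + 2 * S r = m * r.
Proof.
elim: m r => [|m IH] r.
- rewrite expn0 => hr. case: r hr => [|[|r]] hr; [by rewrite S0 | by rewrite (SS 0) S0 | lia].
- rewrite expnS => hr. have [y [ey|ey]] := parity r; subst r.
  + have -> : 2 * 2 ^ m + 2 * y = 2 * (2 ^ m + y) by lia.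
    rewrite f_even; last by have := expn_gt0 2 m; lia.
    rewrite S_double. have := IH y. lia.
  + have -> : 2 * 2 ^ m + (2 * y + 1) = 2 * (2 ^ m + y) + 1 by lia.
    rewrite f_odd; last by have := expn_gt0 2 m; lia.
    have -> : 2 * y + 1 = (2 * y).+1 by rewrite addn1. rewrite SS S_double.
    have := IH y. have := IH y.+1. rewrite SS.
    have -> : 2 ^ m + y + 1 = 2 ^ m + y.+1 by lia. rewrite pc_double. lia.
Qed.

Definition R (t : seq nat) := (\sum_(y <- t) 2 ^ y)%N.

Lemma R_lt x u : sorted gtn (x :: u) -> (R u < 2 ^ x)%N.
Proof.
elim: u x => [|y w IH] x /=.
- by rewrite /R big_nil expn_gt0.
- move=> /andP [hxy hp]. rewrite /R big_cons -/(R w).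
  have := IH y hp. have : (2 ^ y.+1 <= 2 ^ x)%N by rewrite leq_exp2l.
  rewrite expnS. lia.
Qed.

Lemma Qform (t : seq nat) : sorted gtn t -> forall m : int,
  (\sum_(0 <= k < size t) ((2 ^ nth 0%N t k)%:Z * (m - (nth 0%N t k)%:Z - 2 * k%:Z)))%R
  = (m * (R t)%:Z - 2 * (S (R t))%:Z)%R.
Proof.
elim: t => [|x u IH] hs m.
- by rewrite big_geq // /R big_nil S0 mulr0 mulr0 subr0.
- rewrite /= big_nat_recl // /=.
  have hu : sorted gtn u by case: u hs {IH} => //= ? ? /andP [].
  rewrite (eq_bigr (fun k => (2 ^ nth 0%N u k)%:Z * ((m - 2) - (nth 0%N u k)%:Z - 2 * k%:Z))%R); last first.
    move=> k _. lia.
  rewrite IH // /R big_cons -/(R u).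
  have hl := @R_lt _ _ hs.
  rewrite S_pow_add; last by lia.
  have h := S_pow2 x.
  have h' : (2 * (S (2 ^ x))%:Z = x%:Z * (2 ^ x)%:Z)%R by rewrite -!PoszM h.
  rewrite !PoszD. lia.
Qed.

Theorem theorem2 (n : nat) (s : seq nat) :
  (1 <= n)%N -> (0 < size s)%N -> sorted gtn s ->
  n = (\sum_(m <- s) 2 ^ m)%N ->
  is_min_colless n
    ((\sum_(1 <= i < size s)
        ((2 ^ nth 0%N s i)%:Z *
          ((nth 0%N s 0)%:Z - (nth 0%N s i)%:Z - 2 * (i%:Z - 1))))%R).
Proof.
case: s => [|m t] // h1 _ hs hn.
have ht : sorted gtn t by case: t hs {hn} => //= ? ? /andP [].
have hl := @R_lt _ _ hs.
rewrite big_cons -/(R t) in hn.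
have hf := @f_pow m (R t) (ltnW hl).
rewrite -hn in hf.
have -> : ((\sum_(1 <= i < size (m :: t))
        ((2 ^ nth 0%N (m :: t) i)%:Z *
          ((nth 0%N (m :: t) 0)%:Z - (nth 0%N (m :: t) i)%:Z - 2 * (i%:Z - 1))))%R)
   = Posz (f n).
  rewrite /= big_add1 /=.
  rewrite (eq_bigr (fun k => (2 ^ nth 0%N t k)%:Z * (m%:Z - (nth 0%N t k)%:Z - 2 * k%:Z))%R);
    last by move=> k _; lia.
  rewrite Qform //. lia.
split.
- exists (bal n). split; first by rewrite leaves_bal.
  by [].
- move=> t' ht'. rewrite lez_nat -ht'. exact: f_le.
Qed.
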